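(* Let $p\ge 2$ and let $\pi=\langle u,v\mid u^p=v^{p+1}\rangle$ be the group of the $(p,p+1)$ torus knot, with meridian $m=uv^{-1}$ and longitude $l=v^{p+1}m^{-p(p+1)}$. If $X,Y\in H[\pi]$ are the images of $m,l$, then $Y\in H^+[\pi][X^{\pm1}]$.
   Context: For a group $\pi$, the Brumfiel–Hilden algebra is $H[\pi]:=\mathbb{C}[\pi]/I$, where $I$ is the two-sided ideal of the group algebra generated by all elements $g(h+h^{-1})-(h+h^{-1})g$ with $g,h\in\pi$. $H^+[\pi]\subset H[\pi]$ is the subalgebra generated by the images of all $g+g^{-1}$, $g\in\pi$. For an element $X\in H[\pi]$ which is the image of a group element, $H^+[\pi][X^{\pm1}]$ denotes the subalgebra of $H[\pi]$ generated by $H^+[\pi]$, $X$ and $X^{-1}$. *)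

(* Defs.v *)
From HB Require Import structures.
From mathcomp Require Import all_boot all_order all_algebra.
Set Implicit Arguments. Unset Strict Implicit. Unset Printing Implicit Defensive.
Import Order.TTheory GRing.Theory Num.Theory.
Local Open Scope ring_scope.

(* Letters of words in the generators u, v of pi = < u, v | u^p = v^(p+1) >:
   u, u^-1, v, v^-1.  Every element of pi is the image of such a word. *)
Inductive gen := Gu | Gui | Gv | Gvi.

Definition gen_inv (x : gen) : gen :=
  match x with Gu => Gui | Gui => Gu | Gv => Gvi | Gvi => Gv end.

Definition word := seq gen.
Definition word_inv (w : word) : word := rev (map gen_inv w).

Section Eval.
Variables (F : fieldType) (A : algType F) (U Ui V Vi : A).

Definition gen_ev (x : gen) : A :=
  match x with Gu => U | Gui => Ui | Gv => V | Gvi => Vi end.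

Definition word_ev (w : word) : A := \prod_(x <- w) gen_ev x.

Definition sym_ev (w : word) : A := word_ev w + word_ev (word_inv w).

Definition Xev : A := U * Vi.
Definition Xiev : A := V * Ui.

Definition Yev_aux (p : nat) : A := V ^+ p.+1 * Xiev ^+ (p * p.+1).
End Eval.

(* Formal (noncommutative) algebra expressions in the generators of
   H^+[pi][X^{+-1}]: scalars, the elements g + g^-1 (g in pi, given by a word),
   X and X^-1, closed under + and *. *)
Inductive bhexpr (F : Type) :=
| BConst of F
| BSym of word
| BX
| BXi
| BAdd of bhexpr F & bhexpr F
| BMul of bhexpr F & bhexpr F.

Fixpoint bhexpr_ev (F : fieldType) (A : algType F) (U Ui V Vi : A)
    (e : bhexpr F) : A :=
  match e with
  | BConst c => c%:A
  | BSym w => sym_ev U Ui V Vi w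
  | BX => Xev U Vi
  | BXi => Xiev Ui V
  | BAdd e1 e2 => bhexpr_ev U Ui V Vi e1 + bhexpr_ev U Ui V Vi e2
  | BMul e1 e2 => bhexpr_ev U Ui V Vi e1 * bhexpr_ev U Ui V Vi e2
  end.

(* (A, U, V) is a "Brumfiel-Hilden representation" of pi: U, V invertible
   (with inverses Ui, Vi), U^p = V^(p+1), and all elements h + h^-1 are central
   in the image, i.e. g (h + h^-1) = (h + h^-1) g for all g, h in pi.
   H[pi] is the universal such algebra. *)
Definition BH_rep (F : fieldType) (A : algType F) (p : nat) (U Ui V Vi : A) :=
  U * Ui = 1 /\ Ui * U = 1 /\ V * Vi = 1 /\ Vi * V = 1 /\
  U ^+ p = V ^+ p.+1 /\
  (forall g h : word,
        word_ev U Ui V Vi g * sym_ev U Ui V Vi h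
        = sym_ev U Ui V Vi h * word_ev U Ui V Vi g).
Definition Yev (F : fieldType) (A : algType F) (p : nat) (Ui V : A) : A := Yev_aux Ui V p.

(* Main.v *)
Require Import Defs.
From HB Require Import structures.
From mathcomp Require Import all_boot all_order all_algebra.
Import GRing.Theory Num.Theory.
Local Open Scope ring_scope.

Fixpoint cheb2 (F : fieldType) (k : nat) : bhexpr F * bhexpr F :=
  match k with
  | 0 => (BConst 1, BConst 0)
  | k.+1 => (BAdd (BMul (BSym F [:: Gu]) (cheb2 F k).1) (BMul (BConst (-1)) (cheb2 F k).2),
             (cheb2 F k).1)
  end.

Fixpoint powE (F : fieldType) (e : bhexpr F) (n : nat) : bhexpr F :=
  match n with 0 => BConst 1 | n.+1 => BMul (powE F e n) e end.
Arguments powE : simpl never.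

Lemma comm_aux (R : pzRingType) (c x y : R) :
  c * x = x * c -> c * y = y * c -> c * x * y = c * y * x ->
  forall n, c * y ^+ n * x = c * x * y ^+ n.
Proof.
move=> hx hy hxy; elim=> [|n IH]; first by rewrite !expr0 !mulr1.
have cyn : c * y ^+ n = y ^+ n * c by exact: (commrX n hy).
rewrite exprSr (mulrA c) cyn -!mulrA (mulrA c y x) -hxy.
by rewrite !mulrA -cyn IH.
Qed.

Lemma comm_pow (R : pzRingType) (c x y : R) :
  c * x = x * c -> c * y = y * c -> c * x * y = c * y * x ->
  forall n, c * (x * y) ^+ n = c * x ^+ n * y ^+ n.
Proof.
move=> hx hy hxy; elim=> [|n IH]; first by rewrite !expr0 !mulr1.
have cxn : c * x ^+ n = x ^+ n * c by exact: (commrX n hx).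
rewrite exprSr mulrA IH mulrA cxn -!mulrA (mulrA c (y ^+ n)) (mulrA (c * y ^+ n) x).
rewrite (@comm_aux _ c x y hx hy hxy) !mulrA -cxn.
by rewrite !exprSr !mulrA.
Qed.

Section Proof.
Variables (F : fieldType) (A : algType F) (U Ui V Vi : A).
Hypotheses (hUUi : U * Ui = 1) (hUiU : Ui * U = 1) (hVVi : V * Vi = 1) (hViV : Vi * V = 1).
Hypothesis hcom : forall g h : word,
        word_ev U Ui V Vi g * sym_ev U Ui V Vi h
        = sym_ev U Ui V Vi h * word_ev U Ui V Vi g.

Local Notation ev := (bhexpr_ev U Ui V Vi).

Definition cen (c : A) := [/\ c * U = U * c, c * Ui = Ui * c, c * V = V * c & c * Vi = Vi * c].

Lemma cenD a b : cen a -> cen b -> cen (a + b).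
Proof.
by case=> h1 h2 h3 h4 [k1 k2 k3 k4]; split; rewrite mulrDl mulrDr ?h1 ?h2 ?h3 ?h4 ?k1 ?k2 ?k3 ?k4.
Qed.

Lemma cenM a b : cen a -> cen b -> cen (a * b).
Proof.
case=> h1 h2 h3 h4 [k1 k2 k3 k4]; split;
  by rewrite -mulrA ?k1 ?k2 ?k3 ?k4 !mulrA ?h1 ?h2 ?h3 ?h4.
Qed.

Lemma cenC c : cen (c%:A).
Proof. by split; rewrite mulr_algl mulr_algr. Qed.

Lemma cenT : cen (U + Ui).
Proof.
have e : forall y, gen_ev U Ui V Vi y * (U + Ui) = (U + Ui) * gen_ev U Ui V Vi y.
  by move=> y; have := hcom [:: y] [:: Gu]; rewrite /sym_ev /word_ev /word_inv /= !big_seq1 /=.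
by split; apply: esym; [exact: (e Gu)|exact: (e Gui)|exact: (e Gv)|exact: (e Gvi)].
Qed.

Definition ca k := ev (cheb2 F k).1.
Definition cb k := ev (cheb2 F k).2.

Lemma caS k : ca k.+1 = (U + Ui) * ca k - cb k.
Proof.
rewrite /ca /cb /= /sym_ev /word_ev /word_inv /= !big_seq1 /=.
by rewrite mulr_algl scaleN1r.
Qed.

Lemma cbS k : cb k.+1 = ca k.
Proof. by []. Qed.

Lemma cenN a : cen a -> cen (- a).
Proof. by case=> h1 h2 h3 h4; split; rewrite mulNr mulrN ?h1 ?h2 ?h3 ?h4. Qed.

Lemma cheb_cen k : cen (ca k) /\ cen (cb k).
Proof.
elim: k => [|k [h1 h2]]; first by split; apply: cenC.
rewrite caS cbS; split; last exact: h1.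
apply: cenD; [apply: cenM; [exact: cenT|exact: h1]|exact: cenN].
Qed.

Lemma UU : U * U = (U + Ui) * U - 1.
Proof. by rewrite mulrDl hUiU addrK. Qed.

Lemma Upow k : U ^+ k.+1 = ca k * U - cb k.
Proof.
elim: k => [|k IH]; first by rewrite /ca /cb /= scale1r scale0r mul1r subr0 expr1.
rewrite exprS IH mulrBr mulrA.
have [[h1 _ _ _] [k1 _ _ _]] := cheb_cen k.
have [t1 t2 _ _] := cenT.
have hT : ca k * (U + Ui) = (U + Ui) * ca k.
  by rewrite mulrDr mulrDl; case: (cheb_cen k) => -[c1 c2 _ _] _; rewrite c1 c2.
rewrite -h1 -mulrA UU -k1 caS cbS mulrBr mulr1 mulrA hT mulrBl.
by rewrite addrAC.
Qed.

Lemma evpow e n : ev (powE F e n) = ev e ^+ n.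
Proof.
elim: n => [|n IH].
  by have -> : powE F e 0 = BConst 1 by []; rewrite /= scale1r expr0.
by have -> : powE F e n.+1 = BMul (powE F e n) e by []; rewrite /= IH exprSr.
Qed.

Variable q : nat.
Hypothesis hz : U ^+ q.+1 = V ^+ q.+2.

Lemma aUV : ca q * U * V = ca q * V * U.
Proof.
have hc : U ^+ q.+1 * V = V * U ^+ q.+1 by rewrite hz -exprSr exprS.
have [[a1 a2 a3 a4] [b1 b2 b3 b4]] := cheb_cen q.
move: hc; rewrite Upow mulrBl mulrBr b3 => /addIr ->.
by rewrite mulrA a3.
Qed.

Lemma aUVi : ca q * U * Vi = ca q * Vi * U.
Proof.
have [[a1 a2 a3 a4] _] := cheb_cen q.
have e := congr1 (fun w => Vi * w * Vi) aUV; move: e => /=.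
rewrite -!mulrA hVVi mulr1 !mulrA -a4 -(mulrA _ Vi V) hViV mulr1.
by move=> ->.
Qed.

Lemma key : ca q * (U * Vi) ^+ q.+2 = ca q * U.
Proof.
have [[a1 a2 a3 a4] _] := cheb_cen q.
rewrite (@comm_pow _ (ca q) U Vi a1 a4 aUVi) (exprS U q.+1) hz (mulrA (ca q) U) -(mulrA (ca q * U) (V ^+ q.+2)).
rewrite -exprMn_comm; last by rewrite /GRing.comm hVVi hViV.
by rewrite hVVi expr1n mulr1.
Qed.

End Proof.

Theorem proposition5p3 (F : numClosedFieldType) (p : nat) (hp : (2 <= p)%N) :
  exists E : bhexpr F,
    forall (A : algType F) (U Ui V Vi : A),
      BH_rep p U Ui V Vi ->
      Yev p Ui V = bhexpr_ev U Ui V Vi E.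
Proof.
case: p hp => [//|q] _.
exists (BMul (BAdd (BMul (cheb2 F q).1 (powE F (BX F) q.+2))
                   (BMul (BConst (-1)) (cheb2 F q).2))
             (powE F (BXi F) (q.+1 * q.+2))).
move=> A U Ui V Vi [h1 [h2 [h3 [h4 [h5 h6]]]]].
change (V ^+ q.+2 * (V * Ui) ^+ (q.+1 * q.+2) =
  (bhexpr_ev U Ui V Vi (cheb2 F q).1 * bhexpr_ev U Ui V Vi (powE F (BX F) q.+2)
   + (-1)%:A * bhexpr_ev U Ui V Vi (cheb2 F q).2)
  * bhexpr_ev U Ui V Vi (powE F (BXi F) (q.+1 * q.+2))).
rewrite !evpow.
change (bhexpr_ev U Ui V Vi (BX F)) with (U * Vi).
change (bhexpr_ev U Ui V Vi (BXi F)) with (V * Ui).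
have K := @key F A U Ui V Vi h2 h3 h4 h6 q h5.
have UP := @Upow F A U Ui V Vi h2 h6 q.
rewrite /ca /cb in K UP.
by rewrite K mulr_algl scaleN1r -UP h5.
Qed.
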